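(* Suppose $N$ carries a $B$-grading and a $B'$-grading such that the $B'$-grading refines the $B$-grading, and suppose $M$ is a $B$-graded submodule of $N$, i.e. $M=\bigoplus_{b\in B}(M\cap N_b)$. Then every element of every reduced Macaulay basis of $M$ with respect to the $B'$-grading is $B$-homogeneous.
   Context: Standing setup. $\mathbf{k}$ is a field. $(A,+,0)$ is a finitely generated cancellative commutative monoid with a well-ordered total order such that $0<a$ for $a\ne0$ and $a\le a'\Rightarrow a+c\le a'+c$. $R=\bigoplus_{a\in A}R_a$ is a commutative Noetherian $\mathbf{k}$-algebra with $R_aR_{a'}\subseteq R_{a+a'}$. $B$ and $B'$ are well-ordered totally ordered sets, each with an action $(a,b)\mapsto a\cdot b$ of $A$ satisfying $0\cdot b=b$, $(a+a')\cdot b=a\cdot(a'\cdot b)$, monotone and cancellative in each argument. $N$ is a Noetherian $R$-module with gradings $N=\bigoplus_{b\in B}N_b=\bigoplus_{b'\in B'}N'_{b'}$, $R_aN_b\subseteq N_{a\cdot b}$, $R_aN'_{b'}\subseteq N'_{a\cdot b'}$; $M\subseteq N$ an $R$-submodule. The $B'$-grading refines the $B$-grading if there is an order-preserving map $g:B'\to B$ with $g(a\cdot b')=a\cdot g(b')$ and $N_b=\bigoplus_{b'\in g^{-1}(b)}N'_{b'}$ for all $b$. For a nonzero $m$, $\deg m$, $\operatorname{lf}(m)$ (w.r.t. a chosen grading) are the largest degree of a nonzero homogeneous component and that component. A finite set $X$ of nonzero elements of $M$ is a Macaulay basis of $M$ w.r.t. a grading if the $R$-submodule generated by $\{\operatorname{lf}(p):0\ne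 p\in M\}$ equals that generated by $\{\operatorname{lf}(x):x\in X\}$. Reduction (w.r.t. the $B'$-grading): $W_{b'}(X)=\operatorname{span}_{\mathbf{k}}\{r\operatorname{lf}(x): x\in X,\ r\in R\text{ homogeneous},\ r\operatorname{lf}(x)\in N'_{b'}\}$; $m\to_X m'$ iff $\{b': m_{b'}\ne0,\ m_{b'}\in W_{b'}(X)\}$ is nonempty with maximum $b'$ and $m'=m-\sum_jr_jx_j$ with $x_j\in X$, $r_j$ homogeneous, $r_j\operatorname{lf}(x_j)\in N'_{b'}$, $m_{b'}=\sum_jr_j\operatorname{lf}(x_j)$. A reduced Macaulay basis is a Macaulay basis $X$ such that for each $x\in X$ there is no $m'$ with $x\to_{X\setminus\{x\}}m'$. *)

(* Defs.v *)
From HB Require Import structures.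
From mathcomp Require Import all_boot all_order all_algebra.
From Stdlib Require Import ClassicalEpsilon.
Set Implicit Arguments. Unset Strict Implicit. Unset Printing Implicit Defensive.
Import Order.TTheory GRing.Theory.
Local Open Scope ring_scope.

Definition total_order (T : Type) (le : T -> T -> Prop) :=
  (forall x, le x x) /\ (forall x y, le x y -> le y x -> x = y) /\
  (forall x y z, le x y -> le y z -> le x z) /\ (forall x y, le x y \/ le y x).

Definition well_ordered_rel (T : Type) (le : T -> T -> Prop) :=
  forall P : T -> Prop, (exists x, P x) -> exists x, P x /\ forall y, P y -> le x y.

Definition well_ordered (d : Order.disp_t) (T : orderType d) :=
  well_ordered_rel (fun x y : T => (x <= y)%O).

Definition cancellative (A : nmodType) := forall a b c : A, a + c = b + c -> a = b.

Definition fg_monoid (A : nmodType) :=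
  exists s : seq A, forall a : A, exists n : 'I_(size s) -> nat,
      a = \sum_(i < size s) s`_i *+ n i.

Definition ordered_monoid (A : nmodType) (leA : A -> A -> Prop) :=
  [/\ fg_monoid A, cancellative A, total_order leA, well_ordered_rel leA &
      (forall a : A, a <> 0 -> leA 0 a /\ 0 <> a) ] /\
  (forall a a' c : A, leA a a' -> leA (a + c) (a' + c)).

Definition monoid_action (A : nmodType) (leA : A -> A -> Prop)
    (d : Order.disp_t) (B : orderType d) (act : A -> B -> B) :=
  [/\ (forall b, act 0 b = b),
      (forall a a' b, act (a + a') b = act a (act a' b)) &
      (forall a a' b, leA a a' -> (act a b <= act a' b)%O)] /\
  [/\ (forall a b b', (b <= b')%O -> (act a b <= act a b')%O),
      (forall a a' b, act a b = act a' b -> a = a') &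
      (forall a b b', act a b = act a b' -> b = b')].

Definition is_decomp (I : eqType) (T : nmodType) (V : I -> T -> Prop)
    (m : T) (c : I -> T) :=
  (forall i, V i (c i)) /\
  exists s : seq I, [/\ uniq s, (forall i, i \notin s -> c i = 0) &
                        m = \sum_(i <- s) c i].

Definition direct_sum (I : eqType) (T : nmodType) (U : T -> Prop)
    (V : I -> T -> Prop) :=
  [/\ (forall i v, V i v -> U v),
      (forall m, U m -> exists c, is_decomp V m c) &
      (forall m c c', is_decomp V m c -> is_decomp V m c' -> forall i, c i = c' i)].

Section Modules.
Variables (k : fieldType) (R : comAlgType k) (N : lmodType R).

Definition ksubspaceR (P : R -> Prop) :=
  [/\ P 0, (forall u v, P u -> P v -> P (u + v)) & (forall (c : k) u, P u -> P (c *: u))].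

Definition ksubspaceN (P : N -> Prop) :=
  [/\ P 0, (forall u v, P u -> P v -> P (u + v)) & (forall (c : k) u, P u -> P (c%:A *: u))].

Definition ideal (P : R -> Prop) :=
  [/\ P 0, (forall u v, P u -> P v -> P (u + v)) & (forall r u, P u -> P (r * u))].

Definition submodule (P : N -> Prop) :=
  [/\ P 0, (forall u v, P u -> P v -> P (u + v)) & (forall (r : R) u, P u -> P (r *: u))].

Definition rspan (S : N -> Prop) (v : N) :=
  exists n (r : 'I_n -> R) (y : 'I_n -> N), (forall i, S (y i)) /\ v = \sum_i r i *: y i.

Definition kspan (S : N -> Prop) (v : N) :=
  exists n (c : 'I_n -> k) (y : 'I_n -> N), (forall i, S (y i)) /\ v = \sum_i (c i)%:A *: y i.

Definition ispan (S : R -> Prop) (v : R) :=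
  exists n (r : 'I_n -> R) (y : 'I_n -> R), (forall i, S (y i)) /\ v = \sum_i r i * y i.

Definition noetherian_ring :=
  forall P : R -> Prop, ideal P ->
    exists n (y : 'I_n -> R), forall v, P v <-> ispan (fun u => exists i, u = y i) v.

Definition noetherian_module :=
  forall P : N -> Prop, submodule P ->
    exists n (y : 'I_n -> N), forall v, P v <-> rspan (fun u => exists i, u = y i) v.

End Modules.

Definition ring_grading (k : fieldType) (R : comAlgType k) (A : nmodType)
    (RA : A -> R -> Prop) :=
  [/\ (forall a, ksubspaceR (RA a)), direct_sum (fun _ => True) RA &
      (forall a a' r r', RA a r -> RA a' r' -> RA (a + a') (r * r'))].

Definition module_grading (k : fieldType) (R : comAlgType k) (N : lmodType R)
    (A : nmodType) (RA : A -> R -> Prop) (d : Order.disp_t) (B : orderType d)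
    (act : A -> B -> B) (NB : B -> N -> Prop) :=
  [/\ (forall b, ksubspaceN (NB b)), direct_sum (fun _ => True) NB &
      (forall a b r n, RA a r -> NB b n -> NB (act a b) (r *: n))].

Definition refines (k : fieldType) (R : comAlgType k) (N : lmodType R)
    (A : nmodType) (d : Order.disp_t) (B : orderType d) (d' : Order.disp_t)
    (B' : orderType d') (actB : A -> B -> B) (actB' : A -> B' -> B')
    (NB : B -> N -> Prop) (NB' : B' -> N -> Prop) :=
  exists g : B' -> B,
    [/\ (forall b1 b2, (b1 <= b2)%O -> (g b1 <= g b2)%O),
        (forall a b', g (actB' a b') = actB a (g b')) &
        (forall b, direct_sum (NB b)
                     (fun b' v => if g b' == b then NB' b' v else v = 0))].

Definition graded_submodule (k : fieldType) (R : comAlgType k) (N : lmodType R)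
    (d : Order.disp_t) (B : orderType d) (NB : B -> N -> Prop) (M : N -> Prop) :=
  direct_sum M (fun b v => M v /\ NB b v).

Section Leading.
Variables (k : fieldType) (R : comAlgType k) (N : lmodType R)
          (A : nmodType) (RA : A -> R -> Prop)
          (d : Order.disp_t) (B : orderType d) (NB : B -> N -> Prop).

(* the homogeneous component m_b (the decomposition is unique under a grading) *)
Definition comp (m : N) : B -> N :=
  epsilon (inhabits (fun _ => 0)) (fun c => is_decomp NB m c).

Definition is_deg (m : N) (b : B) :=
  comp m b <> 0 /\ forall b'', comp m b'' <> 0 -> (b'' <= b)%O.

Definition lf (m : N) : N :=
  epsilon (inhabits 0) (fun v => exists b, is_deg m b /\ v = comp m b).

Definition homogeneous (m : N) := exists b, NB b m.

Definition macaulay_basis (M : N -> Prop) (X : seq N) :=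
  (forall x, x \in X -> x <> 0 /\ M x) /\
  forall v, rspan (fun u => exists p, [/\ M p, p <> 0 & u = lf p]) v <->
            rspan (fun u => exists2 x, x \in X & u = lf x) v.

Definition Wsp (X : seq N) (b : B) : N -> Prop :=
  kspan (fun v => exists x r a, [/\ x \in X, RA a r, v = r *: lf x & NB b v]).

Definition reduces (X : seq N) (m m' : N) :=
  exists b : B,
    [/\ comp m b <> 0 /\ Wsp X b (comp m b),
        (forall c, comp m c <> 0 -> Wsp X c (comp m c) -> (c <= b)%O) &
        exists n (r : 'I_n -> R) (y : 'I_n -> N),
          [/\ (forall j, y j \in X), (forall j, exists a, RA a (r j)),
              (forall j, NB b (r j *: lf (y j))),
              comp m b = \sum_j r j *: lf (y j) &
              m' = m - \sum_j r j *: y j]].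

Definition reduced_macaulay_basis (M : N -> Prop) (X : seq N) :=
  macaulay_basis M X /\
  forall x, x \in X -> ~ exists m', reduces [seq y <- X | y != x] x m'.

End Leading.

(* Main.v *)
Require Import Defs.
From HB Require Import structures.
From mathcomp Require Import all_boot all_order all_algebra.
From Stdlib Require Import ClassicalEpsilon Classical.
Set Implicit Arguments. Unset Strict Implicit. Unset Printing Implicit Defensive.
Import Order.TTheory GRing.Theory.
Local Open Scope ring_scope.

Lemma fun_choice (X Y : Type) (P : X -> Y -> Prop) :
  (forall x, exists y, P x y) -> exists f : X -> Y, forall x, P x (f x).
Proof.
move=> H; exists (fun x => proj1_sig (constructive_indefinite_description _ (H x))).
by move=> x; case: (constructive_indefinite_description _ (H x)).
Qed.

Lemma seq_max (d : Order.disp_t) (T : orderType d) (s : seq T) (P : T -> Prop) :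
  (exists x, x \in s /\ P x) ->
  exists x, [/\ x \in s, P x & forall y, y \in s -> P y -> (y <= x)%O].
Proof.
elim: s => [|a s IH] [x [xin Px]]; first by [].
case: (classic (exists x, x \in s /\ P x)) => [/IH [m [ms Pm Hm]]|Hn].
  case: (classic (P a)) => Pa.
    case: (leP a m) => am.
      exists m; split => //; first by rewrite inE ms orbT.
      by move=> y; rewrite inE => /orP [/eqP ->|/Hm] //.
    exists a; split => //; first by rewrite inE eqxx.
    move=> y; rewrite inE => /orP [/eqP ->|ys Py] //.
    by apply: le_trans (Hm _ ys Py) (ltW am).
  exists m; split => //; first by rewrite inE ms orbT.
  by move=> y; rewrite inE => /orP [/eqP ->|/Hm] //.
exists a; split.
- by rewrite inE eqxx.
- move: xin; rewrite inE => /orP [/eqP <-|xs] //; by case: Hn; exists x.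
- move=> y; rewrite inE => /orP [/eqP ->|ys Py] //; by case: Hn; exists y.
Qed.

Section Gen.
Variables (I : eqType) (T : nmodType) (V : I -> T -> Prop).
Hypothesis V0 : forall i, V i 0.
Hypothesis VD : forall i u v, V i u -> V i v -> V i (u + v).

Lemma sum_support (s t : seq I) (c : I -> T) :
  uniq s -> uniq t -> (forall i, i \notin s -> c i = 0) -> {subset s <= t} ->
  \sum_(i <- t) c i = \sum_(i <- s) c i.
Proof.
move=> us ut cz st.
rewrite (bigID (fun i => i \in s)) /= [X in _ + X]big1 ?addr0; last first.
  by move=> i /cz.
rewrite -big_filter; apply: perm_big; apply: uniq_perm => //.
  exact: filter_uniq.
by move=> i; rewrite mem_filter; case Hs: (i \in s) => //=; rewrite st.
Qed.

Lemma decomp0 : is_decomp V 0 (fun _ => 0).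
Proof. by split => //; exists [::]; split => //; rewrite big_nil. Qed.

Lemma decomp_delta i m : V i m -> is_decomp V m (fun j => if j == i then m else 0).
Proof.
move=> Vm; split; first by move=> j; case: eqP => [->|] // .
exists [:: i]; split => //.
  by move=> j; rewrite inE; case: eqP.
by rewrite big_seq1 eqxx.
Qed.

Lemma decomp_add m1 m2 c1 c2 : is_decomp V m1 c1 -> is_decomp V m2 c2 ->
  is_decomp V (m1 + m2) (fun i => c1 i + c2 i).
Proof.
move=> [V1 [s1 [u1 z1 e1]]] [V2 [s2 [u2 z2 e2]]]; split; first by move=> i; apply: VD.
exists (undup (s1 ++ s2)); split; first exact: undup_uniq.
  move=> i; rewrite mem_undup mem_cat negb_or => /andP [a b].
  by rewrite z1 ?z2 ?addr0.
have uu := undup_uniq (s1 ++ s2).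
rewrite big_split /= (@sum_support s1 _ c1) // ?(@sum_support s2 _ c2) -?e1 -?e2 //.
- by move=> i Hi; rewrite mem_undup mem_cat Hi orbT.
- by move=> i Hi; rewrite mem_undup mem_cat Hi.
Qed.

Lemma decomp_sum (J : Type) (r : seq J) (m : J -> T) (c : J -> I -> T) :
  (forall j, is_decomp V (m j) (c j)) ->
  is_decomp V (\sum_(j <- r) m j) (fun i => \sum_(j <- r) c j i).
Proof.
move=> H; elim: r => [|a r IH].
  rewrite big_nil; split; first by move=> i; rewrite big_nil.
  by exists [::]; split => //; [move=> i; rewrite big_nil | rewrite big_nil].
rewrite big_cons.
have := decomp_add (H a) IH => [[h1 [s [h2 h3 h4]]]].
split; first by move=> i; rewrite big_cons; apply: h1.
exists s; split => //; first by move=> i /h3; rewrite big_cons.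
by rewrite h4; apply: eq_bigr => i _; rewrite big_cons.
Qed.

End Gen.

Section Graded.
Variables (k : fieldType) (R : comAlgType k) (N : lmodType R).

Lemma kspan_gen (S : N -> Prop) v : S v -> kspan S v.
Proof.
move=> Sv; exists 1%N, (fun _ => 1), (fun _ => v); split; first by [].
by rewrite big_ord1 scale1r scale1r.
Qed.

Lemma kspan0 (S : N -> Prop) : kspan S 0.
Proof. by exists 0%N, (fun _ => 0), (fun _ => 0); split => [[]//|]; rewrite big_ord0. Qed.

Lemma kspanD (S : N -> Prop) u v : kspan S u -> kspan S v -> kspan S (u + v).
Proof.
move=> [n1 [c1 [y1 [S1 e1]]]] [n2 [c2 [y2 [S2 e2]]]].
exists (n1 + n2)%N, (fun i => match split i with inl j => c1 j | inr j => c2 j end),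
  (fun i => match split i with inl j => y1 j | inr j => y2 j end); split.
  by move=> i; case: (split i).
rewrite big_split_ord /= e1 e2; congr (_ + _); apply: eq_bigr => i _.
  by rewrite -[lshift _ _]/(unsplit (inl i)) unsplitK.
by rewrite -[rshift _ _]/(unsplit (inr i)) unsplitK.
Qed.

Lemma kspan_sum (S : N -> Prop) (J : Type) (r : seq J) (f : J -> N) :
  (forall j, kspan S (f j)) -> kspan S (\sum_(j <- r) f j).
Proof.
move=> H; elim: r => [|a r IH]; first by rewrite big_nil; apply: kspan0.
by rewrite big_cons; apply: kspanD.
Qed.

Variables (d : Order.disp_t) (B : orderType d) (NB : B -> N -> Prop).
Hypothesis DS : direct_sum (fun _ => True) NB.

Lemma comp_spec m : is_decomp NB m (Defs.comp NB m).
Proof.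
rewrite /Defs.comp; apply: epsilon_spec.
by case: DS => _ H _; apply: H.
Qed.

Lemma comp_unique m c : is_decomp NB m c -> forall i, Defs.comp NB m i = c i.
Proof. by move=> H i; case: DS => _ _ U; apply: (U m _ _ (comp_spec m) H). Qed.

Lemma comp_hom m b : NB b (Defs.comp NB m b).
Proof. by case: (comp_spec m) => H _. Qed.

Lemma comp_supp m : exists s, [/\ uniq s, forall i, Defs.comp NB m i <> 0 -> i \in s
   & m = \sum_(i <- s) Defs.comp NB m i].
Proof.
case: (comp_spec m) => _ [s [u z e]]; exists s; split => // i H.
by apply/negPn/negP => /z.
Qed.

Lemma deg_exists m : m <> 0 -> exists b, is_deg NB m b.
Proof.
move=> m0; case: (comp_supp m) => s [u z e].
have [b [bs Pb Hb]] : exists b, [/\ b \in s, Defs.comp NB m b <> 0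
   & forall y, y \in s -> Defs.comp NB m y <> 0 -> (y <= b)%O].
  apply: seq_max; apply: NNPP => Hn; apply: m0; rewrite e big1_seq //.
  by move=> i /= Hi; apply: NNPP => ne; apply: Hn; exists i.
by exists b; split => // b'' /[dup] /z; apply: Hb.
Qed.

Lemma lf_spec m : m <> 0 -> exists b, is_deg NB m b /\ lf NB m = Defs.comp NB m b.
Proof.
move=> m0; rewrite /lf; apply: (epsilon_spec (inhabits 0)
   (fun v => exists b, is_deg NB m b /\ v = Defs.comp NB m b)).
by case: (deg_exists m0) => b Hb; exists (Defs.comp NB m b), b.
Qed.

End Graded.

Theorem mainTheorem16
  (k : fieldType) (A : nmodType) (leA : A -> A -> Prop)
  (R : comAlgType k) (RA : A -> R -> Prop)
  (dB : Order.disp_t) (B : orderType dB) (dB' : Order.disp_t) (B' : orderType dB')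
  (actB : A -> B -> B) (actB' : A -> B' -> B')
  (N : lmodType R) (NB : B -> N -> Prop) (NB' : B' -> N -> Prop) (M : N -> Prop) :
  ordered_monoid leA ->
  ring_grading RA -> noetherian_ring R ->
  well_ordered B -> well_ordered B' ->
  monoid_action leA actB -> monoid_action leA actB' ->
  noetherian_module N ->
  module_grading RA actB NB -> module_grading RA actB' NB' ->
  submodule M ->
  refines actB actB' NB NB' ->
  graded_submodule NB M ->
  forall X : seq N, reduced_macaulay_basis RA NB' M X ->
  forall x, x \in X -> homogeneous NB x.
Proof.
move=> [[_ _ [leA_refl _] _ leA0] _] [RAsub DSR _] _ _ _ [[act0 _ actmono] _] _ _
  [NBsub DSB _] [NB'sub DSB' NB'act] _ [g [gmono gact gref]] GS X
  [[MBx MBeq] Hred] x xX.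
apply: NNPP => Hhom.
have NB0 : forall b, NB b 0 by move=> b; case: (NBsub b).
have NBD : forall b u v, NB b u -> NB b v -> NB b (u + v) by move=> b; case: (NBsub b).
have NB'0 : forall b, NB' b 0 by move=> b; case: (NB'sub b).
have NB'D : forall b u v, NB' b u -> NB' b v -> NB' b (u + v) by move=> b; case: (NB'sub b).
have NB'Z : forall b (c : k) u, NB' b u -> NB' b (c%:A *: u) by move=> b; case: (NB'sub b).
case: (MBx x xX) => x0 Mx.
set X' := [seq y <- X | y != x].
have [bx [degx lfx]] := lf_spec DSB' x0.
set b := g bx.
set xc := Defs.comp NB x.
have Mxc : forall c, M (xc c).
  case: GS => _ Hd _; case: (Hd x Mx) => e [He Hs] c.
  have De : is_decomp NB x e by split => // i; case: (He i).
  by rewrite /xc (comp_unique DSB De); case: (He c).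
case: (comp_supp DSB x) => s [us zs es].
have [c0 [c0b xc0]] : exists c0, c0 <> b /\ xc c0 <> 0.
  apply: NNPP => Hn; apply: Hhom; exists b; rewrite es.
  apply: (@big_ind N (NB b)) => //; first exact: NBD. move=> i _.
  case: (i =P b) => [->|ib]; first exact: comp_hom.
  have -> : Defs.comp NB x i = 0 by apply: NNPP => ne; apply: Hn; exists i.
  exact: NB0.
have HE0 : forall c, exists e : B' -> N,
    is_decomp NB' (xc c) e /\ forall b', e b' <> 0 -> g b' = c.
  move=> c.
  case: (gref c) => _ Hd _; case: (Hd (xc c) (comp_hom DSB x c)) => e [He Hs].
  exists e; split.
    split => // b'; have := He b'; case: (g b' == c) => // ->; exact: NB'0.
  move=> b' ne; have := He b'; case: eqP => // _ /ne [].
have [E HE] := fun_choice HE0.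
have Dx : is_decomp NB' x (fun b' => \sum_(c <- s) E c b').
  by rewrite {1}es; apply: decomp_sum => // c; case: (HE c).
have compx : forall b', g b' = c0 -> Defs.comp NB' x b' = E c0 b'.
  move=> b' gb'; rewrite (comp_unique DSB' Dx).
  have c0s : c0 \in s by apply: zs.
  rewrite (bigD1_seq c0) //= big1_seq ?addr0 // => c /andP [cc0 _].
  apply: NNPP => ne; have e := (HE c).2 _ ne; rewrite gb' in e.
  by move: cc0; rewrite e eqxx.
have [d [degd lfd]] := lf_spec DSB' xc0.
have lfE : lf NB' (xc c0) = E c0 d.
  by rewrite lfd; case: (HE c0) => Hd _; rewrite (comp_unique DSB' Hd).
have Ed0 : E c0 d <> 0 by rewrite -lfE lfd; case: degd.
have gd : g d = c0 by case: (HE c0) => _; apply.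
have cxd : Defs.comp NB' x d = lf NB' (xc c0) by rewrite lfE compx.
have c0leb : (c0 <= b)%O.
  rewrite -gd; apply: gmono; case: degx => _; apply; rewrite cxd lfE //.
have : rspan (fun u => exists2 x, x \in X & u = lf NB' x) (lf NB' (xc c0)).
  apply/MBeq; exists 1%N, (fun _ => 1), (fun _ => lf NB' (xc c0)); split.
    move=> _; exists (xc c0); split => //.
  by rewrite big_ord1 scale1r.
move=> [n [r [y [Hy ey]]]].
have Hxs0 : forall i, exists z, z \in X /\ y i = lf NB' z.
  by move=> i; case: (Hy i) => z zX ->; exists z.
have [xs Hxs] := fun_choice Hxs0.
have HES0 : forall i, exists p : (A -> R) * seq A,
    (forall a, RA a (p.1 a)) /\ r i = \sum_(a <- p.2) p.1 a.
  move=> i; case: DSR => _ Hd _; case: (Hd (r i) I) => e [He [sa [_ _ ea]]].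
  by exists (e, sa).
have [ES HES] := fun_choice HES0.
have HD0 : forall i, exists Di,
    is_deg NB' (xs i) Di /\ lf NB' (xs i) = Defs.comp NB' (xs i) Di.
  move=> i; apply: lf_spec => //.
  by case: (MBx (xs i) (proj1 (Hxs i))).
have [D HD] := fun_choice HD0.
set t := fun i a => (ES i).1 a *: lf NB' (xs i).
have Ht : forall i a, NB' (actB' a (D i)) (t i a).
  move=> i a; apply: NB'act; first by case: (HES i) => H _; apply: H.
  by case: (HD i) => _ ->; apply: comp_hom.
have eL : lf NB' (xc c0) = \sum_i \sum_(a <- (ES i).2) t i a.
  rewrite ey; apply: eq_bigr => i _; rewrite (Hxs i).2.
  by case: (HES i) => _ ->; rewrite scaler_suml.
have DL : is_decomp NB' (lf NB' (xc c0))
   (fun b' => \sum_i \sum_(a <- (ES i).2) (if b' == actB' a (D i) then t i a else 0)).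
  rewrite eL; apply: decomp_sum => // i; apply: decomp_sum => // a.
  by apply: decomp_delta => //; apply: Ht.
have DL1 : is_decomp NB' (lf NB' (xc c0)) (fun b' => if b' == d then lf NB' (xc c0) else 0).
  by apply: decomp_delta => //; rewrite lfd; apply: comp_hom.
have eL2 : lf NB' (xc c0) =
    \sum_i \sum_(a <- (ES i).2) (if d == actB' a (D i) then t i a else 0).
  case: DSB' => _ _ U; have := U _ _ _ DL1 DL d; rewrite eqxx => ->; by [].
have cxd_ne : Defs.comp NB' x d <> 0 by rewrite cxd lfE.
have Wd : Wsp RA NB' X' d (Defs.comp NB' x d).
  rewrite cxd eL2; apply: kspan_sum => i; apply: kspan_sum => a.
  case: eqP => [ed|_]; last exact: kspan0.
  apply: kspan_gen; exists (xs i), ((ES i).1 a), a; split.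
  - rewrite mem_filter (Hxs i).1 andbT; apply/eqP => exs.
    have Dix : D i = bx.
      case: (HD i) => [[dn1 dm1] _]; case: degx => dn2 dm2.
      rewrite exs in dn1 dm1.
      by apply/eqP; rewrite eq_le dm2 // dm1.
    have : (b <= c0)%O.
      rewrite -gd ed gact Dix -/b -{1}(act0 b); apply: actmono.
      case: (@eqP _ a 0) => [->|a0]; [exact: leA_refl | exact: (leA0 a a0).1].
    by move=> bc0; apply: c0b; apply/eqP; rewrite eq_le c0leb bc0.
  - by case: (HES i) => H _; apply: H.
  - by [].
  - by rewrite ed; apply: Ht.
case: (comp_supp DSB' x) => s' [us' zs' es'].
have [bm [bms [nzm Wm] Hm]] := @seq_max _ _ s'
  (fun c => Defs.comp NB' x c <> 0 /\ Wsp RA NB' X' c (Defs.comp NB' x c))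
  (ex_intro _ d (conj (zs' d (cxd_ne)) (conj cxd_ne Wd))).
case: (Wm) => n2 [cc [yy [Hyy eyy]]].
have HF0 : forall j, exists p : N * R * A,
    [/\ p.1.1 \in X', RA p.2 p.1.2, yy j = p.1.2 *: lf NB' p.1.1 & NB' bm (yy j)].
  by move=> j; case: (Hyy j) => z [rr [a [H1 H2 H3 H4]]]; exists (z, rr, a).
have [F HF] := fun_choice HF0.
apply: (Hred x xX).
exists (x - \sum_j ((cc j)%:A * (F j).1.2) *: (F j).1.1), bm; split.
- by [].
- move=> c nz Wc; apply: Hm => //; exact: zs'.
- exists n2, (fun j => (cc j)%:A * (F j).1.2), (fun j => (F j).1.1); split.
  + by move=> j; case: (HF j).
  + move=> j; exists (F j).2; rewrite mulr_algl.
    by case: (RAsub (F j).2) => _ _ H; apply: H; case: (HF j).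
  + move=> j; rewrite -scalerA; case: (HF j) => _ _ <- H4; exact: NB'Z.
  + rewrite eyy; apply: eq_bigr => j _; rewrite -scalerA.
    by case: (HF j) => _ _ <-.
  + by [].
Qed.
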